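(* Let $G=(\mathcal{N},\mathcal{L})$ be a finite undirected graph with distinct non-adjacent vertices $a$ (Alice) and $b$ (Bob). Suppose each edge $e\in\mathcal{L}$ carries a key $k_e\in\{0,1\}^n$, the keys being independent and uniformly distributed. In scheme $\mathcal{M}_0$, every vertex $v\notin\{a,b\}$ publicly announces $p_v=\bigoplus_{e\ni v}k_e$ (XOR over all edges incident to $v$); Alice computes $k_A=\bigoplus_{e\ni a}k_e$; Bob computes $k_B=\big(\bigoplus_{v\notin\{a,b\}}p_v\big)\oplus\big(\bigoplus_{e\ni b}k_e\big)$. Then (i) $k_B=k_A$; and (ii) for an attack $\mathcal{A}\subseteq\mathcal{N}\setminus\{a,b\}$, in which the eavesdropper learns all announced parities $p_v$ and all keys $k_e$ with $e\in\mathcal{L}_A$, the key $k_A$ is uniformly distributed and independent of the eavesdropper's information if $\mathcal{A}$ is not a strongest attack, whereas if $\mathcal{A}$ is a strongest attack the eavesdropper can compute $k_A$. In other words, $\mathcal{M}_0$ has the highest security level: it is insecure exactly against the strongest attacks.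
   Context: $\mathcal{L}_A$ is the set of edges with at least one endpoint in $\mathcal{A}$. A communication scheme $\mathcal{M}$ is a set of simple paths from $a$ to $b$; $sec(\mathcal{A},\mathcal{M})=1$ if some path in $\mathcal{M}$ avoids all vertices of $\mathcal{A}$, else $0$. An attack $\mathcal{A}$ is strongest if $sec(\mathcal{A},\mathcal{M})=0$ for all schemes $\mathcal{M}$; equivalently, there is a vertex partition separating $a$ from $b$ all of whose crossing edges lie in $\mathcal{L}_A$. A scheme has the highest security level if it is secure against exactly the attacks that are not strongest. *)

(* Defs.v *)
From HB Require Import structures.
From mathcomp Require Import all_boot all_order all_algebra.
Set Implicit Arguments. Unset Strict Implicit. Unset Printing Implicit Defensive.
Import GRing.Theory.
Local Open Scope ring_scope.

(* A finite undirected simple graph on the finite vertex type V is given by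
   its edge set E : {set {set V}}, every edge being a 2-element set of
   vertices (hypothesis [simple_graph E]).  A key is a vector in 'F_2^n,
   XOR is addition in 'rV['F_2]_n.  A key assignment is a finite function
   from (vertex sets) to keys; only its values on edges e \in E matter. *)

Definition simple_graph (V : finType) (E : {set {set V}}) : Prop :=
  forall e, e \in E -> #|e| = 2%N.

Definition adj (V : finType) (E : {set {set V}}) : rel V :=
  fun x y => [set x; y] \in E.

Definition keys (V : finType) (n : nat) := {ffun {set V} -> 'rV['F_2]_n}.

Definition LA (V : finType) (E : {set {set V}}) (A : {set V}) : {set {set V}} :=
  [set e in E | e :&: A != set0].

Definition simple_path (V : finType) (E : {set {set V}}) (a b : V)
  (p : seq V) : Prop :=
  exists rest, p = a :: rest /\ path (adj E) a rest /\ last a rest = b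
               /\ uniq (a :: rest).

Definition scheme (V : finType) (E : {set {set V}}) (a b : V)
  (M : seq V -> Prop) : Prop :=
  forall p, M p -> simple_path E a b p.

Definition sec (V : finType) (A : {set V}) (M : seq V -> Prop) : Prop :=
  exists p, M p /\ all (fun v => v \notin A) p.

Definition strongest (V : finType) (E : {set {set V}}) (a b : V)
  (A : {set V}) : Prop :=
  forall M, scheme E a b M -> ~ sec A M.

Definition parity (V : finType) (E : {set {set V}}) (n : nat)
  (k : keys V n) (v : V) : 'rV['F_2]_n :=
  \sum_(e in E | v \in e) k e.

Definition keyA (V : finType) (E : {set {set V}}) (n : nat) (a : V)
  (k : keys V n) : 'rV['F_2]_n := parity E k a.

Definition keyB (V : finType) (E : {set {set V}}) (n : nat) (a b : V)
  (k : keys V n) : 'rV['F_2]_n :=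
  (\sum_(v | v \notin [set a; b]) parity E k v) + parity E k b.

(* Eavesdropper's information under attack A: all announced parities p_v
   (v \notin {a,b}; other entries set to 0) and all keys on edges of L_A
   (other entries set to 0). *)
Definition eve_view (V : finType) (E : {set {set V}}) (n : nat) (a b : V)
  (A : {set V}) (k : keys V n) :
  {ffun V -> 'rV['F_2]_n} * {ffun {set V} -> 'rV['F_2]_n} :=
  ([ffun v => if v \in [set a; b] then 0 else parity E k v],
   [ffun e => if e \in LA E A then k e else 0]).

(* Main.v *)
Require Import Defs.
From HB Require Import structures.
From mathcomp Require Import all_boot all_order all_algebra.
Import GRing.Theory.
Local Open Scope ring_scope.
Set Implicit Arguments. Unset Strict Implicit.

Lemma F2_2 : (2%:R : 'F_2) = 0. Proof. exact: pchar_Fp_0. Qed.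
Lemma F2_self (x : 'F_2) : x + x = 0.
Proof. by rewrite -mulr2n -mulr_natr F2_2 mulr0. Qed.
Lemma rv_self n (x : 'rV['F_2]_n) : x + x = 0.
Proof. by rewrite -mulr2n -scaler_nat F2_2 scale0r. Qed.

Lemma double_count (V : finType) (E : {set {set V}}) n (k : keys V n) (S : {set V}) :
  \sum_(v in S) parity E k v = \sum_(e in E) k e *+ #|e :&: S|.
Proof.
rewrite /parity.
under eq_bigr do rewrite big_mkcondr /=.
rewrite exchange_big /=.
apply: eq_bigr => e _.
rewrite -big_mkcondr /= -sumr_const.
by apply: eq_bigl => v; rewrite !inE andbC.
Qed.

Lemma edge2 (V : finType) (E : {set {set V}}) (hE : simple_graph E) e :
  e \in E -> exists x y, x != y /\ e = [set x; y].
Proof. by move=> he; apply/cards2P; apply/eqP; apply: hE. Qed.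

Lemma adj_neq (V : finType) (E : {set {set V}}) (hE : simple_graph E) x y :
  adj E x y -> x != y.
Proof. by rewrite /adj => /hE; rewrite cards2; case: (x != y). Qed.

Lemma path_cochain (V : finType) (E : {set {set V}}) (A : {set V})
  (hE : simple_graph E) : forall rest w, path (adj E) w rest ->
  all (fun v => v \notin A) (w :: rest) ->
  exists c : {set V} -> 'F_2, (forall e, e \in LA E A -> c e = 0) /\
   (forall v, \sum_(e in E | v \in e) c e = (v == w)%:R + (v == last w rest)%:R).
Proof.
elim=> [|w' rest IH] w /=.
  move=> _ _; exists (fun _ => 0); split=> // v.
  by rewrite big1 // F2_self.
move=> /andP [hww' hp] /andP [hw hall].
have [c [hc1 hc2]] := IH w' hp hall.
move: hall => /= /andP [hw' _].
have hne := adj_neq hE hww'.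
exists (fun e => c e + (e == [set w; w'])%:R); split.
  move=> e he; rewrite hc1 // add0r.
  case: eqP => // ee; move: he; rewrite ee inE => /andP [_].
  case/set0Pn => z; rewrite !inE => /andP [/orP [] /eqP -> hz].
  - by rewrite hz in hw.
  - by rewrite hz in hw'.
move=> v; rewrite big_split /= hc2.
have -> : \sum_(e in E | v \in e) ((e == [set w; w'])%:R : 'F_2)
          = (v \in [set w; w'])%:R.
  case hv: (v \in [set w; w']).
    rewrite (bigD1 [set w; w']) /=; last by rewrite hv andbT.
    rewrite eq_refl big1 ?addr0 // => e /andP [_ /negbTE ->]. by [].
  rewrite big1 // => e /andP [_ hve]; case: eqP => // ee.
  by rewrite -ee hve in hv.
have -> : ((v \in [set w; w'])%:R : 'F_2) = (v == w)%:R + (v == w')%:R.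
  rewrite !inE; case: (v =P w) => [->|_]; last by rewrite add0r.
  by rewrite (negbTE hne) addr0.
set X := ((v == w') %:R : 'F_2).
set Y := ((v == last w' rest) %:R : 'F_2).
set Z := ((v == w) %:R : 'F_2).
by rewrite [Z + X]addrC addrA -(addrA X Y X) (addrC Y X) addrA F2_self add0r addrC.
Qed.

Section Count.
Variables (V : finType) (E : {set {set V}}) (n : nat) (a b : V) (A : {set V}).
Hypothesis hab : a != b.
Variable c : {set V} -> 'F_2.
Hypothesis hcLA : forall e, e \in LA E A -> c e = 0.
Hypothesis hbd : forall v, \sum_(e in E | v \in e) c e = (v == a)%:R + (v == b)%:R.

Definition shift (d : 'rV['F_2]_n) (k : keys V n) : keys V n :=
  [ffun e => k e + c e *: d].

Lemma parity_shift d k v :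
  parity E (shift d k) v = parity E k v + (\sum_(e in E | v \in e) c e) *: d.
Proof.
by rewrite /parity; under eq_bigr do rewrite ffunE; rewrite big_split /= scaler_suml.
Qed.

Lemma view_shift d k : eve_view E a b A (shift d k) = eve_view E a b A k.
Proof.
rewrite /eve_view; congr pair; apply/ffunP => v; rewrite !ffunE.
  case: ifP => // hv; rewrite parity_shift hbd.
  move/negbT: hv; rewrite !inE negb_or => /andP [/negbTE -> /negbTE ->].
  by rewrite add0r scale0r addr0.
by case: ifP => // he; rewrite hcLA // scale0r addr0.
Qed.

Lemma keyA_shift d k : keyA E a (shift d k) = keyA E a k + d.
Proof.
by rewrite /keyA parity_shift hbd eq_refl (negbTE hab) addr0 scale1r.
Qed.

Lemma shiftK d : cancel (shift d) (shift (- d)).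
Proof.
by move=> k; apply/ffunP => e; rewrite !ffunE scalerN addrK.
Qed.

Lemma count_eq o x :
  (#|[set k : keys V n | (eve_view E a b A k == o) && (keyA E a k == x)]| * 2 ^ n)%N
  = #|[set k : keys V n | eve_view E a b A k == o]|.
Proof.
pose N y := #|[set k : keys V n | (eve_view E a b A k == o) && (keyA E a k == y)]|.
have HN : forall y, N y = N 0.
  move=> y; rewrite /N.
  have -> : [set k : keys V n | (eve_view E a b A k == o) && (keyA E a k == y)]
     = shift y @: [set k : keys V n | (eve_view E a b A k == o) && (keyA E a k == 0)].
    apply/setP => k; rewrite inE; apply/idP/imsetP.
      move=> /andP [h1 h2]; exists (shift (- y) k).
        by rewrite inE view_shift keyA_shift (eqP h2) subrr h1 eq_refl.
      by rewrite -{1}(opprK y) (@shiftK (- y)).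
    move=> [k' ]; rewrite inE => /andP [h1 h2] ->.
    by rewrite view_shift keyA_shift (eqP h2) add0r h1 eq_refl.
  by rewrite card_imset //; apply: can_inj (@shiftK y).
rewrite -/(N x) -[in RHS]sum1_card (partition_big (keyA E a) xpredT) //=.
rewrite (eq_bigr (fun _ => N x)); last first.
  move=> y _; rewrite HN -(HN y) /N -sum1_card.
  by apply: eq_bigl => k; rewrite !inE.
by rewrite sum_nat_const card_mx card_Fp // mul1n mulnC.
Qed.
End Count.

Lemma keyB_eq (V : finType) (E : {set {set V}}) (hE : simple_graph E) n (a b : V)
  (hab : a != b) (k : keys V n) : keyB E a b k = keyA E a k.
Proof.
have tot : \sum_(v in [set: V]) parity E k v = 0.
  rewrite double_count big1 // => e he.
  by rewrite setIT hE // mulr2n rv_self.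
have hsplit : \sum_(v in [set: V]) parity E k v = parity E k a +
   (parity E k b + \sum_(v | (v != a) && (v != b)) parity E k v).
  rewrite (bigD1 a) ?inE //= (bigD1 b) ?inE 1?eq_sym //=.
  congr (_ + (_ + _)); apply: eq_bigl => v; rewrite !inE.
  by rewrite andbC.
rewrite hsplit in tot.
rewrite /keyB /keyA.
rewrite (eq_bigl (fun v => (v != a) && (v != b))); last first.
  by move=> v; rewrite !inE negb_or.
set X := \sum_(i | _) _. rewrite addrC. have -> : parity E k b + X = parity E k b + X + (parity E k a + (parity E k b + X)) by rewrite tot addr0. by rewrite addrCA rv_self addr0.
Qed.

Lemma strongest_compute (V : finType) (E : {set {set V}}) (hE : simple_graph E)
  n (a b : V) (A : {set V}) (hA : A \subset ~: [set a; b]) :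
  strongest E a b A ->
  exists f, forall k : keys V n, f (eve_view E a b A k) = keyA E a k.
Proof.
move=> hs.
pose r := [rel x y | adj E x y && (x \notin A) && (y \notin A)].
pose S := [set v | connect r a v].
have haA : a \notin A.
  by apply/negP => ha; have := subsetP hA a ha; rewrite !inE eq_refl.
have hpathA : forall p x, path r x p -> all (fun v => v \notin A) p.
  elim => //= y p IH x /andP [/andP [/andP [_ _] hy] hp].
  by rewrite hy (IH y hp).
have hbS : b \notin S.
  rewrite inE; apply/negP => /connectP [p hp].
  case: (shortenP hp) => p' hp' hu _ hb.
  apply: (hs (simple_path E a b)) => //.
  exists (a :: p'); split.
    exists p'; split => //; split.
      by apply: sub_path hp' => x y /andP [/andP []].
    by split.
  by rewrite /= haA (hpathA _ _ hp').
exists (fun o : {ffun V -> 'rV['F_2]_n} * {ffun {set V} -> 'rV['F_2]_n} =>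
   \sum_(v in S | v != a) o.1 v + \sum_(e in E) o.2 e *+ #|e :&: S|).
move=> k; rewrite /eve_view /=.
have h1 : \sum_(v in S | v != a)
    [ffun v => if v \in [set a; b] then 0 else parity E k v] v
    = \sum_(v in S | v != a) parity E k v.
  apply: eq_bigr => v /andP [hv hva]; rewrite ffunE !inE (negbTE hva) /=.
  case: eqP => // ev.
  by move: hv; rewrite ev (negbTE hbS).
have h2 : \sum_(e in E) [ffun e => if e \in LA E A then k e else 0] e *+ #|e :&: S|
    = \sum_(v in S) parity E k v.
  rewrite double_count; apply: eq_bigr => e he; rewrite ffunE; case: ifP => // hLA.
  have [x [y [hxy ee]]] := edge2 hE he.
  have hI : e :&: A = set0.
    by apply/eqP; move: hLA; rewrite inE he /= => /negbT; rewrite negbK.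
  have hx : x \notin A.
    apply/negP => hxA; have : x \in e :&: A by rewrite inE hxA ee !inE eq_refl.
    by rewrite hI inE.
  have hy : y \notin A.
    apply/negP => hyA; have : y \in e :&: A by rewrite inE hyA ee !inE eq_refl orbT.
    by rewrite hI inE.
  have rxy : r x y by rewrite /= /adj -ee he hx hy.
  have ryx : r y x by rewrite /= /adj setUC -ee he hx hy.
  have hxyS : (x \in S) = (y \in S).
    rewrite !inE; apply/idP/idP => h.
      by apply: (connect_trans h); apply: connect1.
    by apply: (connect_trans h); apply: connect1.
  have -> : e :&: S = if x \in S then e else set0.
    apply/setP => z; case hS: (x \in S); rewrite ee ?in_set0 in_setI in_set2;
      case: (z =P x) => [->|_]; rewrite ?hS ?andbF ?andbT //=;
      case: (z =P y) => [->|_]; rewrite -?hxyS ?hS ?andbF ?andbT //=.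
  rewrite mul0rn; case: ifP => _; last by rewrite cards0.
  by rewrite hE // mulr2n rv_self.
rewrite h1 h2 [\sum_(v in S) _](bigD1 a) /=; last by rewrite inE connect0.
by rewrite addrCA rv_self addr0.
Qed.

Theorem theorem2 (V : finType) (E : {set {set V}}) (a b : V) (n : nat)
  (hE : simple_graph E) (hab : a != b) (hnadj : [set a; b] \notin E)
  (A : {set V}) (hA : A \subset ~: [set a; b]) :
  (forall k : keys V n, keyB E a b k = keyA E a k) /\
  (~ strongest E a b A ->
     forall o x,
       (#|[set k : keys V n | (eve_view E a b A k == o) && (keyA E a k == x)]|
          * 2 ^ n)%N
       = #|[set k : keys V n | eve_view E a b A k == o]|) /\
  (strongest E a b A ->
     exists f, forall k : keys V n, f (eve_view E a b A k) = keyA E a k).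
Proof.
split; first by move=> k; apply: keyB_eq.
split; last exact: strongest_compute.
move=> hns o x; apply/eqP; case: eqP => // hne; exfalso.
apply: hns => M hM [p [Mp allp]].
have [rest [ep [hp [hl hu]]]] := hM p Mp.
rewrite ep in allp.
have [c [hc1 hc2]] := path_cochain hE hp allp.
rewrite hl in hc2.
by apply: hne; apply: (count_eq hab hc1 hc2).
Qed.
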